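(* Let $M$ be a matroid with ground set $E(M)$, let $\Gamma$ be an abelian group and let $\psi\colon E(M)\to\Gamma$ be a labeling. The following are equivalent: (i) all bases of $M$ have the same label; (ii) $M$ has a basis $B$ such that $\psi(B')=\psi(B)$ for every basis $B'$ of $M$ with $|B\setminus B'|\le 1$; (iii) $\psi$ is constant on each connected component of $M$.
   Context: All groups are abelian and written additively. For a labeling $\psi\colon E\to\Gamma$ and $S\subseteq E$, $\psi(S):=\sum_{x\in S}\psi(x)$ is the label of $S$. The connected components of a matroid are the classes of the equivalence relation on $E(M)$ in which $x\sim y$ iff $x=y$ or $x$ and $y$ lie in a common circuit. *)

(* Defs.v *)
From mathcomp Require Import all_boot all_order all_algebra.
Set Implicit Arguments. Unset Strict Implicit. Unset Printing Implicit Defensive.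
Import GRing.Theory.
Local Open Scope ring_scope.

Definition base_exchange (T : finType) (BB : {set {set T}}) : Prop :=
  forall B1 B2, B1 \in BB -> B2 \in BB ->
  forall x, x \in B1 :\: B2 ->
  exists2 y, y \in B2 :\: B1 & (y |: (B1 :\ x)) \in BB.

(* A matroid with ground set T (the whole finType), given by its bases. *)
Record matroid (T : finType) := Matroid {
  bases : {set {set T}};
  bases_nonempty : bases != set0;
  bases_exchange : base_exchange bases }.

Definition indep (T : finType) (M : matroid T) (I : {set T}) : Prop :=
  exists2 B, B \in bases M & I \subset B.

Definition circuit (T : finType) (M : matroid T) (C : {set T}) : Prop :=
  ~ indep M C /\ (forall D : {set T}, D \proper C -> indep M D).

(* x ~ y iff x = y or x, y lie in a common circuit; components are its classes *)
Definition comp_rel (T : finType) (M : matroid T) (x y : T) : Prop :=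
  x = y \/ exists C, circuit M C /\ x \in C /\ y \in C.

Definition const_on_components (T : finType) (G : zmodType) (M : matroid T)
  (psi : T -> G) : Prop :=
  forall x y, comp_rel M x y -> psi x = psi y.

Definition label (T : finType) (G : zmodType) (psi : T -> G) (S : {set T}) : G :=
  \sum_(x in S) psi x.

(* Main.v *)
Require Import Defs.
From mathcomp Require Import all_boot all_order all_algebra.
From mathcomp Require Import zify.
Import GRing.Theory.
Set Implicit Arguments. Unset Strict Implicit. Unset Printing Implicit Defensive.

Lemma bases_sub_eq (T : finType) (M : matroid T) B1 B2 :
  B1 \in bases M -> B2 \in bases M -> B1 \subset B2 -> B1 = B2.
Proof.
move=> b1 b2 s12; apply/eqP; rewrite eqEsubset s12 /=.
apply/subsetP=> x xB2; apply/negPn/negP=> xB1.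
have xD : x \in B2 :\: B1 by rewrite inE xB1 xB2.
have [y] := bases_exchange b2 b1 xD.
rewrite inE => /andP[yB2 yB1] _.
by move/subsetP: s12 => /(_ y yB1); rewrite (negbTE yB2).
Qed.

Lemma step_card (T : finType) (B1 B2 : {set T}) x y :
  x \in B1 -> x \notin B2 -> y \in B2 ->
  #|(y |: (B1 :\ x)) :\: B2| < #|B1 :\: B2|.
Proof.
move=> xB1 xB2 yB2.
have -> : (y |: (B1 :\ x)) :\: B2 = (B1 :\: B2) :\ x.
  apply/setP=> z; rewrite !inE.
  case: (z =P y) => [->|_] /=; first by rewrite yB2 /= !andbF.
  by case: (z \in B2); case: (z == x); case: (z \in B1).
by rewrite [#|B1 :\: B2|](cardsD1 x) inE xB1 xB2.
Qed.

Lemma bases_ind (T : finType) (M : matroid T) (P : {set T} -> Prop) B2 :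
  B2 \in bases M -> P B2 ->
  (forall B1 x y, B1 \in bases M -> x \in B1 -> x \notin B2 -> y \in B2 ->
     y \notin B1 -> y |: (B1 :\ x) \in bases M -> P (y |: (B1 :\ x)) -> P B1) ->
  forall B1, B1 \in bases M -> P B1.
Proof.
move=> b2 P2 step B1.
have [n] : exists n, #|B1 :\: B2| <= n by exists #|B1 :\: B2|.
elim: n B1 => [|n IH] B1 hn b1.
  have : B1 :\: B2 == set0 by rewrite -cards_eq0; lia.
  by rewrite setD_eq0 => /(bases_sub_eq b1 b2) ->.
case: (boolP (B1 :\: B2 == set0)) => [|/set0Pn [x xD]].
  by rewrite setD_eq0 => /(bases_sub_eq b1 b2) ->.
have [y] := bases_exchange b1 b2 xD.
move: xD; rewrite !inE => /andP[xB2 xB1] /andP[yB1 yB2] b3.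
apply: (step B1 x y) => //; apply: IH => //.
have := step_card xB1 xB2 yB2; lia.
Qed.

Lemma bases_card (T : finType) (M : matroid T) B1 B2 :
  B1 \in bases M -> B2 \in bases M -> #|B1| = #|B2|.
Proof.
move=> b1 b2; apply: (@bases_ind _ M (fun B => #|B| = #|B2|) B2 b2 _ _ B1 b1) => //.
move=> B x y _ xB _ _ yB _ <-.
rewrite cardsU1 !inE (negbTE yB) andbF /= [#|B|](cardsD1 x) xB; lia.
Qed.

Lemma bases_cardD (T : finType) (M : matroid T) B1 B2 :
  B1 \in bases M -> B2 \in bases M -> #|B1 :\: B2| = #|B2 :\: B1|.
Proof.
move=> b1 b2; have := bases_card b1 b2.
rewrite -(cardsID B2 B1) -(cardsID B1 B2) setIC; lia.
Qed.
Definition indepb (T : finType) (M : matroid T) (I : {set T}) :=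
  [exists B in bases M, I \subset B].

Lemma indepP (T : finType) (M : matroid T) I : reflect (indep M I) (indepb M I).
Proof.
apply: (iffP existsP) => [[B /andP[bB sB]]|[B bB sB]]; first by exists B.
by exists B; rewrite bB sB.
Qed.

Lemma fund_circ (T : finType) (M : matroid T) B1 x y :
  B1 \in bases M -> x \in B1 -> y \notin B1 -> y |: (B1 :\ x) \in bases M ->
  exists C, circuit M C /\ x \in C /\ y \in C.
Proof.
move=> b1 xB1 yB1 b3.
have dep : ~~ indepb M (y |: B1).
  apply/negP => /indepP [B bB sB].
  have e : B1 = B by apply: bases_sub_eq b1 bB (subset_trans (subsetUr _ _) sB).
  by move: yB1; rewrite e (subsetP sB) // setU11.
pose Q := fun C : {set T} => (C \subset y |: B1) && ~~ indepb M C.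
have QD : Q (y |: B1) by rewrite /Q subxx dep.
case: (@arg_minnP _ (y |: B1) Q (fun C : {set T} => #|C|) QD) => C /andP[CD Cdep] Cmin.
have yC : y \in C.
  apply/negPn/negP => yC; move/negP: Cdep; apply; apply/indepP; exists B1 => //.
  apply/subsetP => z zC; move: (subsetP CD z zC); rewrite !inE.
  by case/orP => // /eqP ez; move: zC; rewrite ez (negbTE yC).
have xC : x \in C.
  apply/negPn/negP => xC; move/negP: Cdep; apply; apply/indepP; exists (y |: (B1 :\ x)) => //.
  apply/subsetP => z zC; move: (subsetP CD z zC); rewrite !inE.
  case/orP => [->//|zB]; rewrite zB andbT orbC.
  by apply/orP; left; apply/eqP => ez; move: zC; rewrite ez (negbTE xC).
exists C; split => //; split.
  by move/indepP; apply/negP.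
move=> D DC; apply/indepP; case: (boolP (indepb M D)) => // Ddep.
have QD' : Q D by rewrite /Q Ddep andbT (subset_trans (proper_sub DC) CD).
by have := Cmin D QD'; rewrite leqNgt proper_card.
Qed.

Lemma iii_i (T : finType) (G : zmodType) (M : matroid T) (psi : T -> G) :
  const_on_components M psi ->
  forall B1 B2, B1 \in bases M -> B2 \in bases M -> label psi B1 = label psi B2.
Proof.
move=> hc B1 B2 b1 b2.
apply: (@bases_ind _ M (fun B => label psi B = label psi B2) B2 b2 _ _ B1 b1) => //.
move=> B x y bB xB _ _ yB bB' <-.
have [C [Cc [xC yC]]] := fund_circ bB xB yB bB'.
have exy : psi x = psi y by apply: hc; right; exists C.
rewrite /label (big_setD1 x xB) big_setU1 /=; first by rewrite exy.
by rewrite !inE (negbTE yB) andbF.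
Qed.
Lemma label_split (T : finType) (G : zmodType) (psi : T -> G) (A B : {set T}) :
  label psi A = (label psi (A :&: B) + label psi (A :\: B))%R.
Proof. by rewrite /label (big_setID B). Qed.

Lemma label1 (T : finType) (G : zmodType) (psi : T -> G) a :
  label psi [set a] = psi a.
Proof. by rewrite /label big_set1. Qed.

Lemma i_iii (T : finType) (G : zmodType) (M : matroid T) (psi : T -> G) :
  (forall B1 B2, B1 \in bases M -> B2 \in bases M -> label psi B1 = label psi B2) ->
  const_on_components M psi.
Proof.
move=> hi x y [->//|[C [[Cdep Cmin] [xC yC]]]].
case: (x =P y) => [->//|nxy].
have [B1 b1 s1] := Cmin _ (properD1 xC).
have [B0 b0 s0] := Cmin _ (properD1 yC).
pose Q := fun B : {set T} => (B \in bases M) && (C :\ y \subset B).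
have QB0 : Q B0 by rewrite /Q b0 s0.
case: (@arg_minnP _ B0 Q (fun B : {set T} => #|B :\: B1|) QB0) => B2 /andP[b2 s2] Bmin.
have CB : forall B : {set T}, C :\ x \subset B -> x \in B -> indep M B -> False.
  move=> B sB xB [B' bB' sB']; apply: Cdep; exists B' => //.
  apply/subsetP => z zC; apply: (subsetP sB'); case: (z =P x) => [->//|/eqP nzx].
  by apply: (subsetP sB); rewrite !inE nzx.
have xB2 : x \in B2 by apply: (subsetP s2); rewrite !inE (introN eqP nxy) xC.
have xB1 : x \notin B1.
  by apply/negP => xB1; apply: (CB B1 s1 xB1); exists B1.
have yB1 : y \in B1 by apply: (subsetP s1); rewrite !inE eq_sym (introN eqP nxy) yC.
have yB2 : y \notin B2.
  apply/negP => yB2; apply: Cdep; exists B2 => //.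
  apply/subsetP => z zC; case: (z =P y) => [->//|/eqP nzy].
  by apply: (subsetP s2); rewrite !inE nzy.
have D21 : B2 :\: B1 = [set x].
  apply/eqP; rewrite eqEsubset; apply/andP; split; last first.
    by rewrite sub1set !inE xB2 xB1.
  apply/subsetP => z; rewrite !inE => /andP[zB1 zB2].
  apply/negPn/negP => nzx.
  have zD : z \in B2 :\: B1 by rewrite !inE zB1 zB2.
  have [w] := bases_exchange b2 b1 zD.
  rewrite !inE => /andP[wB2 wB1] bB.
  have QB : Q (w |: (B2 :\ z)).
    rewrite /Q bB /=; apply/subsetP => c; rewrite !inE => /andP[ncy cC].
    apply/orP; right; rewrite (subsetP s2) ?andbT; last by rewrite !inE ncy.
    apply/negP => /eqP ecz; move: zB1; rewrite -ecz.
    by rewrite (subsetP s1) // !inE cC andbT; apply/negP => /eqP ecx; move: nzx; rewrite -ecz ecx eqxx.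
  have := Bmin _ QB; have := step_card zB2 zB1 wB1.
  by move=> h1 h2; move: (leq_trans h1 h2); rewrite ltnn.
have D12 : B1 :\: B2 = [set y].
  have : #|B1 :\: B2| == 1 by rewrite (bases_cardD b1 b2) D21 cards1.
  move/cards1P => [u eu]; move: eu; have : y \in B1 :\: B2 by rewrite !inE yB1 yB2.
  by move=> yD eu; rewrite eu in yD *; move: yD; rewrite inE => /eqP ->.
have := hi B1 B2 b1 b2.
rewrite (@label_split _ _ psi B1 B2) (@label_split _ _ psi B2 B1) D12 D21 !label1 setIC.
by move/addrI.
Qed.
Lemma core_base (T : finType) (M : matroid T) B (K : {set T}) B' :
  B \in bases M -> B' \in bases M ->
  (forall e f, e \notin B -> f \in B -> e |: (B :\ f) \in bases M ->
     (e \in K) = (f \in K)) ->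
  (forall e, e \in B' :\: B -> e \in K) ->
  #|B' :&: K| <= #|B :&: K|.
Proof.
move=> bB bB' H hK.
have hK2 : forall f, f \in B :\: B' -> f \in K.
  move=> f fD; have [e eD bE] := bases_exchange bB bB' fD.
  have eK := hK e eD.
  move: fD eD; rewrite !inE => /andP[fB' fB] /andP[eB eB'].
  by rewrite -(H e f eB fB bE).
have eI : B' :&: K :&: B = B :&: K :&: B'.
  by apply/setP=> z; rewrite !inE; case: (z \in B); case: (z \in B'); case: (z \in K).
have s1 : (B' :&: K) :\: B \subset B' :\: B.
  by apply/subsetP => z; rewrite !inE => /andP[-> /andP[-> _]].
have s2 : B :\: B' \subset (B :&: K) :\: B'.
  apply/subsetP => z zD; have zK := hK2 z zD.
  by move: zD; rewrite !inE zK => /andP[-> ->].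
have c1 := cardsID B (B' :&: K).
have c2 := cardsID B' (B :&: K).
have d := bases_cardD bB' bB.
have l1 := subset_leq_card s1.
have l2 := subset_leq_card s2.
rewrite eI in c1.
move: c1 c2 d l1 l2; clear; lia.
Qed.

Lemma core_le (T : finType) (M : matroid T) B (K : {set T}) :
  B \in bases M ->
  (forall e f, e \notin B -> f \in B -> e |: (B :\ f) \in bases M ->
     (e \in K) = (f \in K)) ->
  forall B', B' \in bases M -> #|B' :&: K| <= #|B :&: K|.
Proof.
move=> bB H B'.
have [n] : exists n, #|B' :\: B| <= n by exists #|B' :\: B|.
elim: n B' => [|n IH] B' hn bB';
  (case: (boolP [exists e in B' :\: B, e \notin K]);
   last by rewrite negb_exists_in => /forall_inP hK;
     apply: (@core_base _ M B K B' bB bB' H) => e /hK /negPn).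
  move/existsP => [e /andP[eD _]]; move: hn; rewrite (cardsD1 e) eD; lia.
move/existsP => [e /andP[eD eK]].
have [y yD bB''] := bases_exchange bB' bB eD.
move: eD yD; rewrite !inE => /andP[eB eB'] /andP[yB' yB].
apply: leq_trans (IH _ _ bB''); last first.
  by have := step_card eB' eB yB; lia.
apply: subset_leq_card; apply/subsetP => z; rewrite !inE => /andP[zB' zK].
rewrite zB' zK !andbT orbC; apply/orP; left; apply/eqP => ez.
by move: eK; rewrite -ez zK.
Qed.
Lemma core_eq (T : finType) (M : matroid T) B (K : {set T}) :
  B \in bases M ->
  (forall e f, e \notin B -> f \in B -> e |: (B :\ f) \in bases M ->
     (e \in K) = (f \in K)) ->
  forall B', B' \in bases M -> #|B' :&: K| = #|B :&: K|.
Proof.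
move=> bB H B' bB'.
have l1 := core_le bB H bB'.
have H' : forall e f, e \notin B -> f \in B -> e |: (B :\ f) \in bases M ->
     (e \in ~: K) = (f \in ~: K).
  by move=> e f eB fB bE; rewrite !inE (H e f eB fB bE).
have l2 := core_le bB H' bB'.
have c := bases_card bB' bB.
have c1 := cardsID K B'; have c2 := cardsID K B.
rewrite !setDE in c1 c2.
move: l1 l2 c c1 c2; clear; lia.
Qed.

Definition rep (T : finType) (G : zmodType) (psi : T -> G) (x : T) : T :=
  odflt x [pick y | psi y == psi x].

Lemma rep_psi (T : finType) (G : zmodType) (psi : T -> G) x : psi (rep psi x) = psi x.
Proof. by rewrite /rep; case: pickP => //= y /eqP. Qed.

Lemma rep_eq (T : finType) (G : zmodType) (psi : T -> G) x x' :
  psi x = psi x' -> rep psi x = rep psi x'.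
Proof.
move=> e; rewrite /rep e; case: pickP => [//|/(_ x')]; by rewrite eqxx.
Qed.

Lemma label_part (T : finType) (G : zmodType) (psi : T -> G) S :
  label psi S = (\sum_(j : T) psi j *+ #|S :&: [set x | rep psi x == j]|)%R.
Proof.
rewrite /label (partition_big (rep psi) xpredT) //=.
apply: eq_bigr => j _.
rewrite -sumr_const.
apply: eq_big => [i|i /andP[_ /eqP <-]]; first by rewrite !inE.
by rewrite rep_psi.
Qed.

Lemma ii_i (T : finType) (G : zmodType) (M : matroid T) (psi : T -> G) :
  (exists2 B, B \in bases M &
      forall B', B' \in bases M -> #|B :\: B'| <= 1 ->
        label psi B' = label psi B) ->
  forall B1 B2, B1 \in bases M -> B2 \in bases M -> label psi B1 = label psi B2.
Proof.
move=> [B bB hB].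
have Hpsi : forall e f, e \notin B -> f \in B -> e |: (B :\ f) \in bases M ->
    psi e = psi f.
  move=> e f eB fB bE.
  have le : #|B :\: (e |: (B :\ f))| <= 1.
    rewrite -(cards1 f); apply: subset_leq_card; apply/subsetP => z.
    rewrite !inE; case: (z =P f) => //= _; by case: (z \in B); rewrite ?andbF ?orbT ?andbT.
  have := hB _ bE le.
  rewrite /label (big_setU1 e) /=; last by rewrite !inE (negbTE eB) andbF.
  rewrite (big_setD1 f fB) /=.
  by move/addIr.
have key : forall B1, B1 \in bases M -> label psi B1 = label psi B.
  move=> B1 b1; rewrite !label_part; apply: eq_bigr => j _.
  congr (_ *+ _)%R; apply: (core_eq bB) => // e f eB fB bE.
  by rewrite !inE (rep_eq (Hpsi e f eB fB bE)).
by move=> B1 B2 b1 b2; rewrite (key B1 b1) (key B2 b2).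
Qed.

Theorem theorem3p1 (T : finType) (G : zmodType) (M : matroid T) (psi : T -> G) :
  ((forall B1 B2, B1 \in bases M -> B2 \in bases M ->
      label psi B1 = label psi B2)
   <->
   (exists2 B, B \in bases M &
      forall B', B' \in bases M -> #|B :\: B'| <= 1 ->
        label psi B' = label psi B))
  /\
  ((exists2 B, B \in bases M &
      forall B', B' \in bases M -> #|B :\: B'| <= 1 ->
        label psi B' = label psi B)
   <->
   const_on_components M psi).
Proof.
have i_ii : (forall B1 B2, B1 \in bases M -> B2 \in bases M ->
      label psi B1 = label psi B2) ->
   (exists2 B, B \in bases M &
      forall B', B' \in bases M -> #|B :\: B'| <= 1 ->
        label psi B' = label psi B).
  move=> hi; have /set0Pn [B bB] := bases_nonempty M.
  by exists B => // B' bB' _; apply: hi.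
split; split.
- exact: i_ii.
- exact: ii_i.
- by move=> h; apply: i_iii; apply: ii_i.
- by move=> h; apply: i_ii; apply: iii_i.
Qed.
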